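(* Let $\mathcal{B}=\{x\in\mathbb{R}^d:\|x\|_2\le R\}$ and $g_1,\dots,g_m$ convex differentiable with $\mathcal{K}=\{x:g_i(x)\le0,\ i=1,\dots,m\}\subseteq\mathcal{B}$ nonempty. Let $f_1,\dots,f_T$ be convex differentiable, and assume for all $x,y\in\mathcal{B}$, $t$, $i$: $\|\nabla f_t(x)\|\le G$, $\|\nabla g_i(x)\|\le G$, $|g_i(x)|\le D$, and $f_t(x)-f_t(y)\le F$. Define $\mathcal{L}_t(x,\lambda)=f_t(x)+\sum_{i=1}^m\bigl(\lambda_ig_i(x)-\frac{\delta\eta}{2}\lambda_i^2\bigr)$ for $\lambda\in\mathbb{R}^m_+$, and run $x_1=0$, $\lambda_1=0$, $$x_{t+1}=\Pi_{\mathcal{B}}\bigl(x_t-\eta\nabla_x\mathcal{L}_t(x_t,\lambda_t)\bigr),\qquad \lambda_{t+1}=\Pi_{[0,\infty)^m}\bigl(\lambda_t+\eta\nabla_\lambda\mathcal{L}_t(x_t,\lambda_t)\bigr).$$ Let $a=R\sqrt{(m+1)G^2+2mD^2}$ and $\eta=R^2/(a\sqrt T)$; assume $T$ is large enough that $2\sqrt2\eta(m+1)\le1$, and choose $\delta>0$ with $\delta\ge(m+1)G^2+2m\delta^2\eta^2$. Then for $x_*=\arg\min_{x\in\mathcal{K}}\sum_{t=1}^Tf_t(x)$, $$\sum_{t=1}^T\bigl(f_t(x_t)-f_t(x_* )\bigr)\le a\sqrt T,\qquad \sum_{t=1}^Tg_i(x_t)\le\sqrt{2\bigl(FT+a\sqrt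 T\bigr)\sqrt T\Bigl(\frac{\delta R^2}{a}+\frac{ma}{R^2}\Bigr)}\quad(i=1,\dots,m).$$
   Context: $\Pi_S$ is Euclidean projection onto $S$; $x_t$ is chosen before $f_t$ is revealed. The iterates need not lie in $\mathcal{K}$; the second bound is the long-term violation of the constraints, which is $O(T^{3/4})$, while the regret is $O(\sqrt T)$. *)

(* Defs.v *)
From HB Require Import structures.
From Stdlib Require Import Reals.
From mathcomp Require Import all_boot.
Set Implicit Arguments.
Unset Strict Implicit.
Unset Printing Implicit Defensive.

Open Scope R_scope.

HB.instance Definition _ :=
  Monoid.isComLaw.Build R 0 Rplus
    (fun a b c => esym (Rplus_assoc a b c)) Rplus_comm Rplus_0_l.

Definition vec (n : nat) := 'I_n -> R.

Definition vzero (n : nat) : vec n := fun _ => 0.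
Definition vadd (n : nat) (x y : vec n) : vec n := fun i => x i + y i.
Definition vsub (n : nat) (x y : vec n) : vec n := fun i => x i - y i.
Definition vscale (n : nat) (c : R) (x : vec n) : vec n := fun i => c * x i.

Definition dot (n : nat) (x y : vec n) : R := \big[Rplus/0]_(i < n) (x i * y i).
Definition norm2 (n : nat) (x : vec n) : R := sqrt (dot x x).

Definition ball (n : nat) (r : R) (x : vec n) : Prop := norm2 x <= r.
Definition orthant (n : nat) (x : vec n) : Prop := forall i, 0 <= x i.

Definition is_proj (n : nat) (S : vec n -> Prop) (y p : vec n) : Prop :=
  S p /\ forall z, S z -> norm2 (vsub y p) <= norm2 (vsub y z).

Definition convex (n : nat) (h : vec n -> R) : Prop :=
  forall (x y : vec n) (s : R), 0 <= s <= 1 ->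
    h (vadd (vscale s x) (vscale (1 - s) y)) <= s * h x + (1 - s) * h y.

Definition is_gradient (n : nat) (h : vec n -> R) (x g : vec n) : Prop :=
  forall eps, 0 < eps -> exists del, 0 < del /\
    forall y : vec n, norm2 (vsub y x) < del ->
      Rabs (h y - h x - dot g (vsub y x)) <= eps * norm2 (vsub y x).

Definition sumT (T : nat) (u : nat -> R) : R := \big[Rplus/0]_(1 <= t < T.+1) u t.

(* Main.v *)
Require Import Defs.
From HB Require Import structures.
From Stdlib Require Import Reals Lra.
From mathcomp Require Import all_boot.
From mathcomp Require Import zify.
Open Scope R_scope.
Set Implicit Arguments.
Unset Strict Implicit.
Lemma sum_split (I : Type) (r : seq I) (P : pred I) F G : \big[Rplus/0]_(i <- r | P i) (F i + G i) = \big[Rplus/0]_(i <- r | P i) F i + \big[Rplus/0]_(i <- r | P i) G i.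
Proof. elim: r => [|h r IH]; rewrite ?big_nil ?big_cons; [lra|]. case: (P h); rewrite IH; lra. Qed.
Lemma sum_scal (I : Type) (r : seq I) (P : pred I) (c : R) F : \big[Rplus/0]_(i <- r | P i) (c * F i) = c * \big[Rplus/0]_(i <- r | P i) F i.
Proof. elim: r => [|h r IH]; rewrite ?big_nil ?big_cons; [lra|]. case: (P h); rewrite IH; lra. Qed.
Lemma sum_le (I : Type) (r : seq I) (P : pred I) F G : (forall i, P i -> F i <= G i) -> \big[Rplus/0]_(i <- r | P i) F i <= \big[Rplus/0]_(i <- r | P i) G i.
Proof. move=> H. apply: (big_ind2 (fun a b => a <= b)) => //; [lra|]. move=> *; lra. Qed.
Lemma sum_ge0 (I : Type) (r : seq I) (P : pred I) F : (forall i, P i -> 0 <= F i) -> 0 <= \big[Rplus/0]_(i <- r | P i) F i.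
Proof. move=> H. apply: (big_ind (fun a => 0 <= a)) => //; [lra|]. move=> *; lra. Qed.
Lemma sum3 (I : Type) (r : seq I) (P : pred I) F G H a b : \big[Rplus/0]_(i <- r | P i) (F i + a * G i + b * H i) = \big[Rplus/0]_(i <- r | P i) F i + a * \big[Rplus/0]_(i <- r | P i) G i + b * \big[Rplus/0]_(i <- r | P i) H i.
Proof. by rewrite !sum_split !sum_scal. Qed.

Lemma sum3s (I : Type) (r : seq I) (P : pred I) F G H c a b : \big[Rplus/0]_(i <- r | P i) (c * F i + a * G i + b * H i) = c * \big[Rplus/0]_(i <- r | P i) F i + a * \big[Rplus/0]_(i <- r | P i) G i + b * \big[Rplus/0]_(i <- r | P i) H i.
Proof. by rewrite !sum_split !sum_scal. Qed.

Definition sq n (x : vec n) := dot x x.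

Lemma sq_ge0 n (x : vec n) : 0 <= sq x.
Proof. apply: sum_ge0 => i _; nra. Qed.

Lemma sqrt_le_sq (u c : R) : 0 <= u -> sqrt u <= c -> u <= c ^ 2 /\ 0 <= c.
Proof. move=> h1 h2. have h3 := sqrt_pos u. have h4 := sqrt_sqrt u h1. split; nra. Qed.

Lemma ball_sq n r (y : vec n) : ball r y -> sq y <= r ^ 2 /\ 0 <= r.
Proof. rewrite /ball /norm2 => h. by apply: sqrt_le_sq => //; apply: sq_ge0. Qed.

Lemma sq_ball n r (y : vec n) : 0 <= r -> sq y <= r ^ 2 -> ball r y.
Proof. move=> h1 h2. rewrite /ball /norm2. rewrite -(sqrt_pow2 r h1). apply: sqrt_le_1_alt. exact h2. Qed.

Lemma proj_ineq n (S : vec n -> Prop) y p z :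
  is_proj S y p -> S z -> (forall s, 0 < s <= 1 -> S (fun k => p k + s * (z k - p k))) ->
  sq (vsub p z) <= sq (vsub y z).
Proof.
move=> [Sp Hmin] Sz Hconv.
set A := sq (vsub y p). set B := dot (vsub y p) (vsub z p). set C := sq (vsub z p).
have HC : 0 <= C by apply: sq_ge0.
have HA : 0 <= A by apply: sq_ge0.
have key : forall s, 0 < s <= 1 -> 2 * B <= s * C.
  move=> s hs. have := Hmin _ (Hconv s hs). rewrite /norm2 => h.
  have h2 := sqrt_le_0 _ _ (sq_ge0 _) (sq_ge0 _) h.
  have e : sq (vsub y (fun k => p k + s * (z k - p k))) = A + (-2 * s) * B + (s ^ 2) * C.
    rewrite /A /B /C /sq /dot -sum3; apply: eq_bigr => k _; rewrite /vsub; ring.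
  have h3 : A <= A + (-2 * s) * B + (s ^ 2) * C by rewrite -e; exact h2.
  nra.
have HB : B <= 0.
  case: (Rle_lt_dec B 0) => // hB.
  have := key (B / (B + C)). 
  have hBC : 0 < B + C by lra.
  move=> H. have : 2 * B <= B / (B + C) * C.
    apply: H. split; first by apply: Rdiv_lt_0_compat.
    apply: (Rmult_le_reg_r (B + C)) => //. rewrite /Rdiv Rmult_assoc Rinv_l; lra.
  have : B / (B + C) * C <= B.
    rewrite /Rdiv Rmult_assoc. have : / (B + C) * C <= 1.
      apply: (Rmult_le_reg_l (B + C)) => //. rewrite -Rmult_assoc Rinv_r; lra.
    nra.
  lra.
have e : sq (vsub y z) = A + (-2) * B + 1 * sq (vsub p z).
  rewrite /A /B /sq /dot -sum3; apply: eq_bigr => k _; rewrite /vsub; ring.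
lra.
Qed.

Lemma ball_conv n r (p z : vec n) : ball r p -> ball r z ->
  forall s, 0 < s <= 1 -> ball r (fun k => p k + s * (z k - p k)).
Proof.
move=> /ball_sq [hp hr] /ball_sq [hz _] s hs. apply: sq_ball => //.
have e1 : sq (fun k => p k + s * (z k - p k)) = (1 - s) ^ 2 * sq p + (2 * s * (1 - s)) * dot p z + s ^ 2 * sq z.
  rewrite /sq /dot -sum3s; apply: eq_bigr => k _; ring.
have e2 : sq (vsub p z) = sq p + (-2) * dot p z + 1 * sq z.
  rewrite /sq /dot -sum3; apply: eq_bigr => k _; rewrite /vsub; ring.
have := sq_ge0 (vsub p z). rewrite e1 e2 => h0.
have h1 : 0 <= s * (1 - s) by nra.
have h2 := Rmult_le_compat_l _ _ _ h1 (Rle_trans _ _ _ (Rle_refl 0) h0).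
nra.
Qed.

Lemma orth_conv n (p z : vec n) : orthant p -> orthant z ->
  forall s, 0 < s <= 1 -> orthant (fun k => p k + s * (z k - p k)).
Proof. move=> hp hz s hs k. have := hp k. have := hz k. nra. Qed.

Lemma grad_ineq n (h : vec n -> R) (x z gx : vec n) :
  convex h -> is_gradient h x gx -> dot gx (vsub z x) <= h z - h x.
Proof.
move=> hc hg.
set q := dot gx (vsub z x). set N := norm2 (vsub z x).
have HN : 0 <= N by apply: sqrt_pos.
case: (Rle_lt_dec q (h z - h x)) => // hlt.
pose eps := (q - (h z - h x)) / (2 * (N + 1)).
have heps : 0 < eps by apply: Rdiv_lt_0_compat; lra.
have [del [hdel Hd]] := hg eps heps.
pose s := Rmin 1 (del / (2 * (N + 1))).
have hs0 : 0 < s by apply: Rmin_pos; [lra| apply: Rdiv_lt_0_compat; lra].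
have hs1 : s <= 1 by apply: Rmin_l.
have hs2 : s <= del / (2 * (N + 1)) by apply: Rmin_r.
pose y := vadd (vscale s z) (vscale (1 - s) x).
have ey : sq (vsub y x) = s ^ 2 * sq (vsub z x).
  rewrite /sq /dot -sum_scal; apply: eq_bigr => k _; rewrite /vsub /y /vadd /vscale; ring.
have eN : norm2 (vsub y x) = s * N.
  rewrite /norm2 -/(sq _) ey sqrt_mult; last by apply: sq_ge0. 2: nra.
  rewrite /N /norm2 sqrt_pow2 //; lra.
have eq' : dot gx (vsub y x) = s * q.
  rewrite /q /dot -sum_scal; apply: eq_bigr => k _; rewrite /vsub /y /vadd /vscale; ring.
have hsN : s * N < del.
  have : s * N <= del / (2 * (N + 1)) * N by nra.
  have : del / (2 * (N + 1)) * N < del.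
    rewrite /Rdiv Rmult_assoc. have : / (2 * (N + 1)) * N < 1.
      apply: (Rmult_lt_reg_l (2 * (N + 1))); first lra. rewrite -Rmult_assoc Rinv_r; lra.
    nra.
  lra.
have := Hd y. rewrite eN eq'. move=> /(_ hsN) habs.
have hconv := hc z x s (conj (Rlt_le _ _ hs0) hs1). rewrite -/y in hconv.
have habs2 : - (h y - h x - s * q) <= eps * (s * N).
  apply: Rle_trans (Rle_abs _) _; rewrite Rabs_Ropp; exact habs.
have : s * q - eps * (s * N) <= s * (h z - h x) by lra.
move=> H.
have H2 : q - eps * N <= h z - h x.
  apply: (Rmult_le_reg_l s) => //; lra.
have : eps * N < (q - (h z - h x)).
  rewrite /eps /Rdiv Rmult_assoc Rmult_comm Rmult_assoc. have : / (2 * (N + 1)) * N < 1.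
    apply: (Rmult_lt_reg_l (2 * (N + 1))); first lra. rewrite -Rmult_assoc Rinv_r; lra.
  nra.
lra.
Qed.

Lemma sum_const n (c : R) : \big[Rplus/0]_(i < n) c = INR n * c.
Proof. elim: n => [|n IH]; first by rewrite big_ord0 /=; ring.
rewrite big_ord_recr IH S_INR /=; ring. Qed.

Lemma cs_sum n (a : R) (y : 'I_n -> R) :
  (a + \big[Rplus/0]_(i < n) y i) * (a + \big[Rplus/0]_(i < n) y i)
  <= (INR n + 1) * (a * a + \big[Rplus/0]_(i < n) (y i * y i)).
Proof.
elim: n y => [|n IH] y; first by rewrite !big_ord0 /=; lra.
rewrite !big_ord_recr S_INR /=.
set W := \big[Rplus/0]_(i < n) y (widen_ord (leqnSn n) i).
set Q := \big[Rplus/0]_(i < n) _.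
have H := IH (fun i => y (widen_ord (leqnSn n) i)). rewrite -/W -/Q in H.
set z := y ord_max.
have hn : 0 <= INR n := pos_INR n.
have h1 := Rle_0_sqr (a + W - (INR n + 1) * z). rewrite /Rsqr in h1.
have e : a + (W + z) = (a + W) + z by ring.
rewrite e.
apply: (Rmult_le_reg_l (INR n + 1)); first lra.
have h2 : 0 <= INR n + 1 + 1 by lra.
have h3 := Rmult_le_compat_l _ _ _ h2 H.
clearbody W Q z. clear IH. move: (INR n) hn h1 h2 h3 => c; intros. nra.
Qed.

Lemma sum_mulr (I : Type) (r : seq I) (P : pred I) F c : (\big[Rplus/0]_(i <- r | P i) F i) * c = \big[Rplus/0]_(i <- r | P i) (F i * c).
Proof. rewrite Rmult_comm -sum_scal; apply: eq_bigr => i _; ring. Qed.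

Lemma dot_lin n m (a : vec n) (l : 'I_m -> R) (b : 'I_m -> vec n) (w : vec n) :
  dot (fun k => a k + \big[Rplus/0]_(i < m) (l i * b i k)) w
  = dot a w + \big[Rplus/0]_(i < m) (l i * dot (b i) w).
Proof.
rewrite /dot.
have e : \big[Rplus/0]_(k < n) ((a k + \big[Rplus/0]_(i < m) (l i * b i k)) * w k)
  = \big[Rplus/0]_(k < n) (a k * w k + \big[Rplus/0]_(i < m) (l i * (b i k * w k))).
  apply: eq_bigr => k _. rewrite Rmult_plus_distr_r sum_mulr. f_equal. apply: eq_bigr => i _; ring.
rewrite e sum_split. f_equal. rewrite exchange_big /=. apply: eq_bigr => i _. by rewrite sum_scal.
Qed.

Lemma sq_lin_bound n m (a : vec n) (l : 'I_m -> R) (b : 'I_m -> vec n) (G : R) :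
  sq a <= G ^ 2 -> (forall i, sq (b i) <= G ^ 2) ->
  sq (fun k => a k + \big[Rplus/0]_(i < m) (l i * b i k)) <= (INR m + 1) * G ^ 2 * (1 + sq l).
Proof.
move=> ha hb. rewrite /sq /dot.
apply: Rle_trans.
  apply: sum_le => k _. apply: cs_sum.
rewrite sum_scal sum_split.
have e : \big[Rplus/0]_(k < n) \big[Rplus/0]_(i < m) (l i * b i k * (l i * b i k))
   = \big[Rplus/0]_(i < m) ((l i * l i) * dot (b i) (b i)).
  rewrite exchange_big /=. apply: eq_bigr => i _. rewrite /dot -sum_scal. apply: eq_bigr => k _; ring.
rewrite e.
have h1 : \big[Rplus/0]_(i < m) ((l i * l i) * dot (b i) (b i)) <= \big[Rplus/0]_(i < m) ((l i * l i) * G ^ 2).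
  apply: sum_le => i _. have := hb i. rewrite /sq => h. have h0 := Rle_0_sqr (l i). rewrite /Rsqr in h0. by apply: Rmult_le_compat_l.
have e2 : \big[Rplus/0]_(i < m) ((l i * l i) * G ^ 2) = G ^ 2 * \big[Rplus/0]_(i < m) (l i * l i).
  rewrite -sum_scal; apply: eq_bigr => i _; ring.
rewrite e2 in h1. rewrite /sq /dot in ha.
have hm : 0 <= INR m + 1 by have := pos_INR m; lra.
apply: Rle_trans (Rmult_le_compat_l _ _ _ hm (Rplus_le_compat _ _ _ _ ha h1)) _.
right; ring.
Qed.

Lemma sq_v_bound m (gg l : vec m) c D : (forall i, Rabs (gg i) <= D) ->
  sq (fun i => gg i - c * l i) <= 2 * INR m * D ^ 2 + 2 * c ^ 2 * sq l.
Proof.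
move=> hg. rewrite /sq /dot.
apply: Rle_trans (_ : _ <= \big[Rplus/0]_(i < m) (2 * D ^ 2 + (2 * c ^ 2) * (l i * l i))) _.
  apply: sum_le => i _. have h := hg i. have h0 := Rabs_pos (gg i).
  have h1 : gg i * gg i <= D ^ 2.
    have := Rsqr_abs (gg i). rewrite /Rsqr => ->. nra.
  have h2 := Rle_0_sqr (gg i + c * l i). rewrite /Rsqr in h2. nra.
right. rewrite sum_split sum_const sum_scal. congr (_ + _); ring.
Qed.

Lemma sq_vsub0 n (z : vec n) : sq (vsub (@vzero n) z) = sq z.
Proof. rewrite /sq /dot; apply: eq_bigr => k _; rewrite /vsub /vzero; ring. Qed.

Lemma dot_neg n (g a b : vec n) : dot g (vsub a b) = - dot g (vsub b a).
Proof. rewrite /dot. have -> : forall r, - r = (-1) * r by move=> r; ring.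
rewrite -sum_scal; apply: eq_bigr => k _; rewrite /vsub; ring. Qed.

Lemma sumT_S n u : sumT n.+1 u = sumT n u + u n.+1.
Proof. by rewrite /sumT big_nat_recr. Qed.

Lemma sumT_0 u : sumT 0 u = 0.
Proof. by rewrite /sumT big_geq. Qed.

Theorem mainTheorem11
  (d m T : nat) (Rad G D F delta : R)
  (f : nat -> vec d -> R) (df : nat -> vec d -> vec d)
  (g : 'I_m -> vec d -> R) (dg : 'I_m -> vec d -> vec d)
  (x : nat -> vec d) (lam : nat -> vec m) (xs : vec d) :
  let K := fun y : vec d => forall i : 'I_m, g i y <= 0 in
  let a := Rad * sqrt ((INR m + 1) * G ^ 2 + 2 * INR m * D ^ 2) in
  let eta := Rad ^ 2 / (a * sqrt (INR T)) in
  (* constraints *)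
  (forall i, convex (g i)) ->
  (forall i y, is_gradient (g i) y (dg i y)) ->
  (forall y, K y -> ball Rad y) ->
  (exists y, K y) ->
  (* losses *)
  (forall t, (1 <= t <= T)%nat -> convex (f t)) ->
  (forall t y, (1 <= t <= T)%nat -> is_gradient (f t) y (df t y)) ->
  (* bounds on the ball *)
  (forall t y, (1 <= t <= T)%nat -> ball Rad y -> norm2 (df t y) <= G) ->
  (forall i y, ball Rad y -> norm2 (dg i y) <= G) ->
  (forall i y, ball Rad y -> Rabs (g i y) <= D) ->
  (forall t y z, (1 <= t <= T)%nat -> ball Rad y -> ball Rad z -> f t y - f t z <= F) ->
  (* parameters *)
  0 < a ->
  2 * sqrt 2 * eta * (INR m + 1) <= 1 ->
  0 < delta ->
  (INR m + 1) * G ^ 2 + 2 * INR m * delta ^ 2 * eta ^ 2 <= delta ->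
  (* the algorithm *)
  x 1%nat = @vzero d ->
  lam 1%nat = @vzero m ->
  (forall t, (1 <= t <= T)%nat ->
     is_proj (ball Rad)
       (vsub (x t)
          (vscale eta (fun k => df t (x t) k
                         + \big[Rplus/0]_(i < m) (lam t i * dg i (x t) k))))
       (x t.+1)) ->
  (forall t, (1 <= t <= T)%nat ->
     is_proj (@orthant m)
       (fun i => lam t i + eta * (g i (x t) - delta * eta * lam t i))
       (lam t.+1)) ->
  (* comparator: a minimizer of the cumulative loss over K *)
  K xs ->
  (forall y, K y -> sumT T (fun t => f t xs) <= sumT T (fun t => f t y)) ->
  sumT T (fun t => f t (x t) - f t xs) <= a * sqrt (INR T) /\
  (forall i : 'I_m,
     sumT T (fun t => g i (x t)) <=
     sqrt (2 * (F * INR T + a * sqrt (INR T)) * sqrt (INR T)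
           * (delta * Rad ^ 2 / a + INR m * a / Rad ^ 2))).
Proof.
move=> K a eta hgc hgg hKb [y0 hy0] hfc hfg hdfb hdgb hgD hF ha hcond0 hdel hdcond hx1 hl1 hxstep hlstep hxs hmin.
have hR : 0 <= Rad by have [_ ?] := ball_sq (hKb _ hy0).
case: (posnP T) => [hT0|hT].
  rewrite hT0 !sumT_0 /= sqrt_0. split; first lra. move=> i; rewrite sumT_0; apply: sqrt_pos.
have hTpos : 0 < INR T by apply: lt_0_INR; apply/ltP.
set st := sqrt (INR T).
have hst : 0 < st := sqrt_lt_R0 _ hTpos.
have hst2 : st * st = INR T := sqrt_sqrt _ (Rlt_le _ _ hTpos).
set Q := (INR m + 1) * G ^ 2 + 2 * INR m * D ^ 2.
have hm0 := pos_INR m.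
have hQ : 0 <= Q by rewrite /Q; have := pow2_ge_0 G; have := pow2_ge_0 D; nra.
have ha2 : a * a = Rad ^ 2 * Q by rewrite /a -/Q; have := sqrt_sqrt Q hQ; nra.
have hRne : Rad <> 0 by move=> h0; move: ha; rewrite /a h0; lra.
have hRpos : 0 < Rad by lra.
have heta : 0 < eta by rewrite /eta -/st; apply: Rdiv_lt_0_compat; [nra| nra].
have hetaa : eta * (a * st) = Rad ^ 2 by rewrite /eta -/st; field; split; lra.
have inv : forall t, (1 <= t <= T.+1)%nat -> ball Rad (x t) /\ orthant (lam t).
  case => [|t] ht; first by lia.
  case: (t =P 0%nat) => [->|ht0].
    rewrite hx1 hl1. split; last by move=> i; rewrite /vzero; lra.
    apply: sq_ball => //. rewrite /sq /dot big1 => [|k _]; rewrite /vzero; nra.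
  have ht' : (1 <= t <= T)%nat by lia.
  split; [exact: (hxstep t ht').1 | exact: (hlstep t ht').1].
have hde : 0 <= delta * eta by nra.
have hcondl : forall l : vec m, ((INR m + 1) * G ^ 2 + 2 * (delta * eta) ^ 2) * sq l <= delta * sq l.
  move=> l. case: (m =P 0%nat) => [hm|hm].
    have -> : sq l = 0 by rewrite /sq /dot; move: l; rewrite hm => l; rewrite big_ord0.
    lra.
  have hm1 : 1 <= INR m by apply: (le_INR 1); lia.
  have h0 := pow2_ge_0 (delta * eta).
  have h1 : 0 <= INR m - 1 by lra.
  have h2 := Rmult_le_compat_l _ _ _ h1 h0.
  have h : (INR m + 1) * G ^ 2 + 2 * (delta * eta) ^ 2 <= delta.
    apply: Rle_trans hdcond. clear -h2. move: (INR m) h2 => c h2. nra.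
  apply: Rmult_le_compat_r => //. exact: sq_ge0.
have step : forall z mu t, K z -> orthant mu -> (1 <= t <= T)%nat ->
  2 * eta * (f t (x t) - f t z + \big[Rplus/0]_(i < m) (mu i * g i (x t)) - delta * eta / 2 * sq mu)
  <= sq (vsub (x t) z) + sq (vsub (lam t) mu) - (sq (vsub (x t.+1) z) + sq (vsub (lam t.+1) mu)) + eta ^ 2 * Q.
  move=> z mu t hz hmu ht.
  have [bx ol] := inv t ltac:(lia).
  have [bx' ol'] := inv t.+1 ltac:(lia).
  have bz := hKb z hz.
  pose u := fun k => df t (x t) k + \big[Rplus/0]_(i < m) (lam t i * dg i (x t) k).
  pose v := fun i => g i (x t) - delta * eta * lam t i.
  pose w := vsub (x t) z.
  have ha1 := proj_ineq (hxstep t ht) bz (ball_conv bx' bz).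
  have ea : sq (vsub (vsub (x t) (vscale eta u)) z) = sq w + (-2 * eta) * dot u w + eta ^ 2 * sq u.
    rewrite /sq /dot -sum3; apply: eq_bigr => k _; rewrite /w /vsub /vscale; ring.
  have A1 : sq (vsub (x t.+1) z) <= sq w + (-2 * eta) * dot u w + eta ^ 2 * sq u by rewrite -ea; exact ha1.
  have hb1 := proj_ineq (hlstep t ht) hmu (orth_conv ol' hmu).
  have eb : sq (vsub (fun i => lam t i + eta * v i) mu) = sq (vsub (lam t) mu) + (-2 * eta) * dot v (vsub mu (lam t)) + eta ^ 2 * sq v.
    rewrite /sq /dot -sum3; apply: eq_bigr => k _; rewrite /vsub; ring.
  have B1 : sq (vsub (lam t.+1) mu) <= sq (vsub (lam t) mu) + (-2 * eta) * dot v (vsub mu (lam t)) + eta ^ 2 * sq v by rewrite -eb; exact hb1.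
  have hf := @grad_ineq _ _ (x t) z _ (hfc t ht) (hfg t (x t) ht).
  rewrite dot_neg -/w in hf.
  have hdl : dot u w = dot (df t (x t)) w + \big[Rplus/0]_(i < m) (lam t i * dot (dg i (x t)) w) by apply: dot_lin.
  have hh : \big[Rplus/0]_(i < m) (lam t i * (g i (x t) - g i z)) <= \big[Rplus/0]_(i < m) (lam t i * dot (dg i (x t)) w).
    apply: sum_le => i _. have := @grad_ineq _ _ (x t) z _ (hgc i) (hgg i (x t)). rewrite dot_neg -/w => h.
    have := ol i. nra.
  have hgs : \big[Rplus/0]_(i < m) (mu i * g i (x t)) + (- (delta * eta / 2)) * sq mu + (delta * eta / 2) * sq (lam t)
       <= \big[Rplus/0]_(i < m) (lam t i * (g i (x t) - g i z)) + dot v (vsub mu (lam t)).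
    rewrite /sq /dot -sum3 -sum_split. apply: sum_le => i _. rewrite /v /vsub.
    have := ol i. have := hmu i. have := hz i. move=> h1 h2 h3.
    have h4 := Rle_0_sqr (lam t i - mu i). rewrite /Rsqr in h4.
    have h5 : 0 <= - (lam t i * g i z) by nra.
    have h6 := Rmult_le_compat_l _ _ _ hde (Rle_trans _ _ _ (Rle_refl 0) h4). nra.
  have hu : sq u <= (INR m + 1) * G ^ 2 * (1 + sq (lam t)).
    apply: sq_lin_bound.
      by have [? _] := sqrt_le_sq (sq_ge0 _) (hdfb t (x t) ht bx).
    by move=> i; have [? _] := sqrt_le_sq (sq_ge0 _) (hdgb i (x t) bx).
  have hv : sq v <= 2 * INR m * D ^ 2 + 2 * (delta * eta) ^ 2 * sq (lam t).
    by apply: sq_v_bound => i; apply: hgD.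
  have hsum : sq u + sq v <= Q + delta * sq (lam t).
    have hc := hcondl (lam t). rewrite /Q. clear -hu hv hc. move: (INR m) (sq u) (sq v) (sq (lam t)) (delta * eta) hu hv hc => c su sv sl de; intros. nra.
  have he2 := Rmult_le_compat_l _ _ _ (pow2_ge_0 eta) hsum.
  set P := dot u w + dot v (vsub mu (lam t)).
  have hP : f t (x t) - f t z + \big[Rplus/0]_(i < m) (mu i * g i (x t)) - delta * eta / 2 * sq mu + delta * eta / 2 * sq (lam t) <= P.
    rewrite /P hdl. lra.
  have h2e : 0 <= 2 * eta by lra.
  have H := Rmult_le_compat_l _ _ _ h2e hP.
  rewrite /P /w in H. rewrite /w in A1.
  clear -H A1 B1 he2. lra.
have core : forall z mu, K z -> orthant mu -> forall n, (n <= T)%nat ->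
  2 * eta * (sumT n (fun t => f t (x t) - f t z) + \big[Rplus/0]_(i < m) (mu i * sumT n (fun t => g i (x t))) - INR n * (delta * eta / 2) * sq mu)
  <= sq (vsub (x 1%nat) z) + sq (vsub (lam 1%nat) mu) - (sq (vsub (x n.+1) z) + sq (vsub (lam n.+1) mu)) + INR n * (eta ^ 2 * Q).
  move=> z mu hz hmu. elim => [|n IH] hn.
    rewrite sumT_0 big1 => [|i _]; last by rewrite sumT_0; ring.
    have -> : INR 0 = 0 by []. lra.
  have IH' := IH ltac:(lia).
  have hs := step z mu n.+1 hz hmu ltac:(lia).
  have e : \big[Rplus/0]_(i < m) (mu i * sumT n.+1 (fun t => g i (x t)))
     = \big[Rplus/0]_(i < m) (mu i * sumT n (fun t => g i (x t))) + \big[Rplus/0]_(i < m) (mu i * g i (x n.+1)).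
    rewrite -sum_split; apply: eq_bigr => i _; rewrite sumT_S; ring.
  rewrite e sumT_S S_INR.
  clear -IH' hs. lra.
have hxsb := hKb xs hxs.
have [hxsq _] := ball_sq hxsb.
have hk : eta * st * Q = a.
  apply: (Rmult_eq_reg_r a); last lra.
  rewrite ha2 -hetaa; ring.
have hkey : Rad ^ 2 + INR T * (eta ^ 2 * Q) = 2 * eta * (a * st).
  rewrite -hst2 -hetaa -hk. ring.
have hlow : forall n, (n <= T)%nat -> - (INR n * F) <= sumT n (fun t => f t (x t) - f t xs).
  elim => [|n IH] hn; first by rewrite sumT_0; have -> : INR 0 = 0 by []; lra.
  rewrite sumT_S S_INR.
  have := IH ltac:(lia).
  have [b1 _] := inv n.+1 ltac:(lia).
  have := hF n.+1 xs (x n.+1) ltac:(lia) hxsb b1. lra.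
split.
  have C := core xs (@vzero m) hxs (fun i => Rle_refl 0) T (leqnn T).
  rewrite hx1 hl1 !sq_vsub0 in C.
  have e0 : sq (@vzero m) = 0 by rewrite /sq /dot big1 // => i _; rewrite /vzero; ring.
  have e1 : \big[Rplus/0]_(i < m) (@vzero m i * sumT T (fun t => g i (x t))) = 0.
    by rewrite big1 // => i _; rewrite /vzero; ring.
  rewrite e0 e1 in C.
  have hD := sq_ge0 (vsub (x T.+1) xs). have hD2 := sq_ge0 (vsub (lam T.+1) (@vzero m)).
  apply: (Rmult_le_reg_l (2 * eta)); first lra.
  rewrite -hkey. clear -C hxsq hD hD2. lra.
move=> i.
set S := sumT T (fun t => g i (x t)).
case: (Rle_lt_dec S 0) => hS; first by apply: Rle_trans hS (sqrt_pos _).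
set E := INR T * delta * eta ^ 2 + 1.
have hE : 0 < E.
  have h1 : 0 <= INR T * delta * eta ^ 2 by apply: Rmult_le_pos; [apply: Rmult_le_pos; lra | apply: pow2_ge_0].
  rewrite /E; lra.
set M := eta * S / E.
have hM : 0 <= M by rewrite /M; apply: Rlt_le; apply: Rdiv_lt_0_compat; nra.
pose mu := fun j : 'I_m => if j == i then M else 0.
have hmu : orthant mu by move=> j; rewrite /mu; case: (j == i); lra.
have C := core xs mu hxs hmu T (leqnn T).
rewrite hx1 hl1 !sq_vsub0 in C.
have e0 : sq mu = M * M.
  rewrite /sq /dot (bigD1 i) //= big1 => [|j hj]; first by rewrite /mu eqxx; ring.
  by rewrite /mu (negbTE hj); ring.
have e1 : \big[Rplus/0]_(j < m) (mu j * sumT T (fun t => g j (x t))) = M * S.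
  rewrite (bigD1 i) //= big1 => [|j hj]; first by rewrite /mu eqxx /S; ring.
  by rewrite /mu (negbTE hj); ring.
rewrite e0 e1 in C.
have hD := sq_ge0 (vsub (x T.+1) xs). have hD2 := sq_ge0 (vsub (lam T.+1) mu).
have hl := hlow T (leqnn T).
set B := F * INR T + a * st.
have W : 2 * eta * M * S - E * (M * M) <= 2 * eta * B.
  rewrite /E /B. move: C. rewrite -/S. clear -hl hxsq hD hD2 hkey heta.
  move: hkey hl. set sf := sumT T _. move=> hkey hl C.
  have hl2 : 2 * eta * (- (INR T * F)) <= 2 * eta * sf by apply: Rmult_le_compat_l; lra.
  lra.
have W2 : eta * (S * S) <= 2 * B * E.
  have eM : M * E = eta * S by rewrite /M; field; lra.
  have : E * (2 * eta * M * S - E * (M * M)) <= E * (2 * eta * B) by apply: Rmult_le_compat_l; lra.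
  have -> : E * (2 * eta * M * S - E * (M * M)) = eta * (eta * (S * S)).
    have -> : E * (2 * eta * M * S - E * (M * M)) = 2 * eta * (M * E) * S - (M * E) * (M * E) by ring.
    rewrite eM; ring.
  move=> H. apply: (Rmult_le_reg_l eta) => //. lra.
have hB : 0 <= B.
  have : 0 <= eta * (S * S) by nra. move=> h. have : 0 <= B * E by lra. move=> h'.
  case: (Rle_lt_dec 0 B) => // hb. nra.
have hm1 : 1 <= INR m.
  have := ltn_ord i.
  move=> h; apply: (le_INR 1); apply/leP; lia.
have Hrad : eta * (2 * B * st * (delta * Rad ^ 2 / a + INR m * a / Rad ^ 2)) = 2 * B * (INR T * delta * eta ^ 2 + INR m).
  rewrite -hst2 -hetaa. field. split; lra.
have HS2 : S * S <= 2 * B * st * (delta * Rad ^ 2 / a + INR m * a / Rad ^ 2).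
  apply: (Rmult_le_reg_l eta) => //. rewrite Hrad.
  apply: Rle_trans W2 _. rewrite /E. nra.
rewrite -/B.
rewrite -(sqrt_square S); last lra.
apply: sqrt_le_1_alt. exact HS2.
Qed.
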